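(* Let $n\ge1$ and $P=\Phi^+(A_n)=\{(i,j)\colon1\le i,j\le n,\ i+j\ge n+1\}$. For $1\le i\le n$ let $\overline{R}_i\coloneqq\sum_{j'\ge n+1-i}T^-_{(i,j')}+\sum_{i'\ge i}T^-_{(i',n+1-i)}$ (sums over elements of $P$). Then \[\tfrac12\big(\overline{R}_1-\overline{R}_2+\overline{R}_3-\cdots+(-1)^{n-1}\overline{R}_n\big)\equiv^q\begin{cases}0&\text{if $n$ is even},\\ \frac{1}{q+1}&\text{if $n$ is odd}.\end{cases}\]
   Context: $P$ is ordered by $(i,j)\le(i',j')$ iff $i\le i'$ and $j\le j'$. $\mathcal{J}(P)$ is the set of order ideals. For $p\in P$, $I\in\mathcal{J}(P)$: $T_p^+(I)=1$ if $p$ is minimal in $P\setminus I$, else $0$; $T_p^-(I)=1$ if $p$ is maximal in $I$, else $0$; $T_p^q=T_p^+-qT_p^-$ with $q$ an indeterminate. For $f,g\colon\mathcal{J}(P)\to\mathbb{R}(q)$, $f\equiv^q g$ means $f-g=\sum_{p\in P}c_p(q)T_p^q$ for some $c_p(q)\in\mathbb{R}(q)$; an element of $\mathbb{R}(q)$ denotes a constant function. *)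

(* Defs.v *)
From HB Require Import structures.
From mathcomp Require Import all_boot all_order all_algebra fraction.
From mathcomp Require Import reals.
Set Implicit Arguments. Unset Strict Implicit. Unset Printing Implicit Defensive.
Import Order.TTheory GRing.Theory Num.Theory.
Local Open Scope ring_scope.

(* The poset P = Phi^+(A_n) = {(i,j) : 1 <= i,j <= n, i + j >= n+1},
   1-indexed: coordinates are stored as ordinals of 'I_n.+1 (values 0..n),
   and the predicate enforces 1 <= i, 1 <= j, i + j >= n+1. *)
Definition inPhi (n : nat) (p : 'I_n.+1 * 'I_n.+1) : bool :=
  [&& (1 <= nat_of_ord p.1)%N, (1 <= nat_of_ord p.2)%N & (n.+1 <= nat_of_ord p.1 + nat_of_ord p.2)%N].

Definition Phi (n : nat) := {p : 'I_n.+1 * 'I_n.+1 | inPhi p}.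

Definition pi1 n (p : Phi n) : nat := (val p).1.
Definition pi2 n (p : Phi n) : nat := (val p).2.

Definition ple n (p p' : Phi n) : bool :=
  (pi1 p <= pi1 p')%N && (pi2 p <= pi2 p')%N.
Definition plt n (p p' : Phi n) : bool := (p != p') && ple p p'.

Definition is_ideal n (I : {set Phi n}) : bool :=
  [forall p, forall p', (p' \in I) ==> ple p p' ==> (p \in I)].

Definition ideals n := {I : {set Phi n} | is_ideal I}.

Definition ratfun (R : realType) := {fraction {poly R}}.
Definition qvar (R : realType) : ratfun R := tofrac 'X.

(* T_p^+(I) = 1 iff p is minimal in P \ I. *)
Definition Tplus (R : realType) n (p : Phi n) (I : ideals n) : ratfun R :=
  ((p \notin val I) && [forall p', plt p' p ==> (p' \notin val I) ==> false])%:R.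

Definition Tminus (R : realType) n (p : Phi n) (I : ideals n) : ratfun R :=
  ((p \in val I) && [forall p', (p' \in val I) ==> ~~ plt p p'])%:R.

Definition Tq (R : realType) n (p : Phi n) (I : ideals n) : ratfun R :=
  Tplus R p I - qvar R * Tminus R p I.

Definition qequiv (R : realType) n (f g : ideals n -> ratfun R) : Prop :=
  exists c : Phi n -> ratfun R,
    forall I : ideals n, f I - g I = \sum_(p : Phi n) c p * Tq R p I.

Definition Rbar (R : realType) n (i : nat) (I : ideals n) : ratfun R :=
  \sum_(p : Phi n | (pi1 p == i) && (n.+1 - i <= pi2 p)%N) Tminus R p I
  + \sum_(p : Phi n | (pi2 p == n.+1 - i)%N && (i <= pi1 p)%N) Tminus R p I.

(* Main.v *)
Require Import Defs.
From HB Require Import structures.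
From mathcomp Require Import all_boot all_order all_algebra fraction.
From mathcomp Require Import reals.
From mathcomp Require Import ring zify.
Import Order.TTheory GRing.Theory Num.Theory.
Local Open Scope ring_scope.
Set Implicit Arguments. Unset Strict Implicit. Unset Printing Implicit Defensive.

Definition inP (n a b : nat) : bool :=
  [&& (1 <= a)%N, (1 <= b)%N & (n.+1 <= a + b)%N].
Definition memc n (I : ideals n) (a b : nat) : bool :=
  [exists p : Phi n, [&& pi1 p == a, pi2 p == b & p \in val I]].
Definition below (n a b : nat) : bool :=
  [&& (a <= n)%N, (b <= n)%N & ~~ inP n a b].
Definition Xb n (I : ideals n) a b : bool := below n a b || memc I a b.

Lemma pi_bounds n (p : Phi n) :
  [/\ (1 <= pi1 p)%N, (1 <= pi2 p)%N, (n.+1 <= pi1 p + pi2 p)%N,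
      (pi1 p <= n)%N & (pi2 p <= n)%N].
Proof.
case: p => [[a b] /= H]; rewrite /pi1 /pi2 /=.
move: H; rewrite /inPhi /= => /and3P [H1 H2 H3].
by split => //; rewrite -ltnS.
Qed.

Lemma Phi_eq n (p p' : Phi n) : pi1 p = pi1 p' -> pi2 p = pi2 p' -> p = p'.
Proof.
case: p => [[a b] Hp]; case: p' => [[a' b'] Hp']; rewrite /pi1 /pi2 /= => E1 E2.
apply: val_inj => /=.
by rewrite (ord_inj E1) (ord_inj E2).
Qed.

Lemma exPhi n a b : (a <= n)%N -> (b <= n)%N -> inP n a b ->
  exists p : Phi n, pi1 p = a /\ pi2 p = b.
Proof.
move=> Ha Hb H.
have Ha' : (a < n.+1)%N by [].
have Hb' : (b < n.+1)%N by [].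
have Hin : inPhi (Ordinal Ha', Ordinal Hb') by [].
by exists (exist (fun p => inPhi p) _ Hin).
Qed.

Lemma memcP n (I : ideals n) p : memc I (pi1 p) (pi2 p) = (p \in val I).
Proof.
apply/existsP/idP => [[p' /and3P [/eqP E1 /eqP E2 H]]|H].
  by rewrite -(Phi_eq E1 E2).
by exists p; rewrite !eqxx H.
Qed.

Lemma memcE n (I : ideals n) a b : memc I a b ->
  exists p : Phi n, [/\ pi1 p = a, pi2 p = b & p \in val I].
Proof. by case/existsP => p /and3P [/eqP E1 /eqP E2 H]; exists p. Qed.

Lemma ideal_down n (I : ideals n) (p p' : Phi n) :
  p' \in val I -> ple p p' -> p \in val I.
Proof.
move=> H1 H2; case: I H1 => S /= HS H1.
by move: HS => /forallP /(_ p) /forallP /(_ p') /implyP /(_ H1) /implyP /(_ H2).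
Qed.

Lemma memc_down n (I : ideals n) a b a' b' :
  memc I a b -> (a' <= a)%N -> (b' <= b)%N -> inP n a' b' -> memc I a' b'.
Proof.
move=> /memcE [p [E1 E2 Hp]] Ha Hb Hin.
case: (pi_bounds p) => _ _ _ Ha0 Hb0.
have [p' [F1 F2]] : exists p' : Phi n, pi1 p' = a' /\ pi2 p' = b'.
  apply: exPhi => //; lia.
rewrite -F1 -F2 memcP; apply: ideal_down Hp _.
by rewrite /ple F1 F2 E1 E2 Ha Hb.
Qed.

Lemma memc_outa n (I : ideals n) a b : (n < a)%N -> memc I a b = false.
Proof.
move=> H; apply/negbTE/negP => /memcE [p [E1 _ _]].
case: (pi_bounds p) => _ _ _ Ha _; lia.
Qed.

Lemma memc_outb n (I : ideals n) a b : (n < b)%N -> memc I a b = false.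
Proof.
move=> H; apply/negbTE/negP => /memcE [p [_ E2 _]].
case: (pi_bounds p) => _ _ _ _ Hb; lia.
Qed.

Lemma Xb_in n (I : ideals n) a b : inP n a b -> Xb I a b = memc I a b.
Proof. by move=> H; rewrite /Xb /below H !andbF. Qed.

Lemma Xb_m n (I : ideals n) (p : Phi n) : Xb I (pi1 p) (pi2 p) = (p \in val I).
Proof.
case: (pi_bounds p) => h1 h2 h3 _ _.
by rewrite Xb_in ?memcP // /inP h1 h2 h3.
Qed.

Lemma lower_in n (I : ideals n) (p : Phi n) a b :
  (a <= pi1 p)%N -> (b <= pi2 p)%N -> p \in val I -> Xb I a b.
Proof.
move=> Ha Hb Hm; rewrite /Xb.
case: (pi_bounds p) => h1 h2 h3 h4 h5.
case E: (inP n a b).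
  by rewrite (memc_down (a:=pi1 p) (b:=pi2 p)) ?orbT ?memcP.
by apply/orP; left; rewrite /below E andbT; apply/andP; split; lia.
Qed.

Lemma Tminus_eq (R : realType) n (I : ideals n) (p : Phi n) :
  Tminus R p I = ((p \in val I) && ~~ memc I (pi1 p).+1 (pi2 p)
                  && ~~ memc I (pi1 p) (pi2 p).+1)%:R.
Proof.
rewrite /Tminus; congr ((nat_of_bool _)%:R).
case: (pi_bounds p) => h1 h2 h3 h4 h5.
apply/idP/idP.
  case/andP => Hm /forallP Hall; rewrite Hm /=.
  apply/andP; split; apply/negP => /memcE [p' [E1 E2 Hp']];
    move: (Hall p'); rewrite Hp' /= => /negP; apply;
    (apply/andP; split; [apply/eqP => E; move: E1 E2; rewrite -E; lia
                        | by rewrite /ple E1 E2 ?leqnSn ?leqnn]).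
case/andP => /andP [Hm H1] H2; rewrite Hm /=.
apply/forallP => p'; apply/implyP => Hp'; apply/negP => /andP [Hne /andP [L1 L2]].
case: (pi_bounds p') => g1 g2 g3 g4 g5.
case: (ltngtP (pi1 p) (pi1 p')) => C1.
- move/negP: H1; apply; apply: (memc_down (a:=pi1 p') (b:=pi2 p')); rewrite ?memcP //.
  by rewrite /inP; apply/and3P; split; lia.
- lia.
case: (ltngtP (pi2 p) (pi2 p')) => C2.
- move/negP: H2; apply; apply: (memc_down (a:=pi1 p') (b:=pi2 p')); rewrite ?memcP //.
  by rewrite /inP; apply/and3P; split; lia.
- lia.
by move: Hne; rewrite (Phi_eq C1 C2) eqxx.
Qed.

Lemma Tplus_eq (R : realType) n (I : ideals n) (p : Phi n) :
  Tplus R p I = (~~ (p \in val I) && Xb I (pi1 p).-1 (pi2 p)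
                  && Xb I (pi1 p) (pi2 p).-1)%:R.
Proof.
rewrite /Tplus; congr ((nat_of_bool _)%:R).
case: (pi_bounds p) => h1 h2 h3 h4 h5.
apply/idP/idP.
  case/andP => Hm /forallP Hall; rewrite Hm /=.
  have key : forall a b, (a <= pi1 p)%N -> (b <= pi2 p)%N -> (a + b < pi1 p + pi2 p)%N -> Xb I a b.
    move=> a b Ha Hb Hab; rewrite /Xb.
    case E: (inP n a b); last by apply/orP; left; rewrite /below E andbT; apply/andP; split; lia.
    have [c [F1 F2]] : exists c : Phi n, pi1 c = a /\ pi2 c = b by apply: exPhi => //; lia.
    apply/orP; right; rewrite -F1 -F2 memcP.
    have Hlt : plt c p.
      rewrite /plt /ple F1 F2 Ha Hb /= andbT.
      by apply/eqP => E'; move: Hab; rewrite -E' F1 F2; lia.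
    by move: (Hall c); rewrite Hlt /=; case: (c \in val I).
  by apply/andP; split; apply: key; lia.
case/andP => /andP [Hm H1] H2; rewrite Hm /=.
apply/forallP => p'; apply/implyP => /andP [Hne /andP [L1 L2]]; apply/implyP => Hp'.
suff : p' \in val I by rewrite (negbTE Hp').
case: (pi_bounds p') => g1 g2 g3 g4 g5.
have key : forall a b, Xb I a b -> (pi1 p' <= a)%N -> (pi2 p' <= b)%N -> p' \in val I.
  move=> a b; rewrite /Xb /below => /orP [/and3P [_ _ /negP E] Ha Hb|Hc Ha Hb].
    by exfalso; apply: E; rewrite /inP; apply/and3P; split; lia.
  by rewrite -memcP; apply: (memc_down Hc) => //; rewrite /inP g1 g2 g3.
case: (ltngtP (pi1 p') (pi1 p)) => C1.
- by apply: (key _ _ H1); lia.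
- lia.
case: (ltngtP (pi2 p') (pi2 p)) => C2.
- by apply: (key _ _ H2); lia.
- lia.
by move: Hne; rewrite (Phi_eq C1 C2) eqxx.
Qed.

Definition X (R : realType) n (I : ideals n) a b : ratfun R := (Xb I a b)%:R.

Lemma Tminus_lin (R : realType) n (I : ideals n) (p : Phi n) :
  Tminus R p I = X R I (pi1 p) (pi2 p) - X R I (pi1 p).+1 (pi2 p)
     - X R I (pi1 p) (pi2 p).+1 + X R I (pi1 p).+1 (pi2 p) * X R I (pi1 p) (pi2 p).+1.
Proof.
case: (pi_bounds p) => h1 h2 h3 h4 h5.
rewrite Tminus_eq /X Xb_m !Xb_in; last 2 first.
  by rewrite /inP; apply/and3P; split; lia.
  by rewrite /inP; apply/and3P; split; lia.
have i1 : memc I (pi1 p).+1 (pi2 p) -> p \in val I.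
  by move=> H; rewrite -memcP; apply: (memc_down H) => //; rewrite /inP h1 h2 h3.
have i2 : memc I (pi1 p) (pi2 p).+1 -> p \in val I.
  by move=> H; rewrite -memcP; apply: (memc_down H) => //; rewrite /inP h1 h2 h3.
move: i1 i2.
case: (p \in val I); case: (memc I _ _); case: (memc I _ _) => //= H1 H2; (try by case: (H1 isT)); (try by case: (H2 isT)); ring.
Qed.

Lemma Tplus_lin (R : realType) n (I : ideals n) (p : Phi n) :
  Tplus R p I = X R I (pi1 p).-1 (pi2 p) * X R I (pi1 p) (pi2 p).-1
                - X R I (pi1 p) (pi2 p).
Proof.
rewrite Tplus_eq /X Xb_m.
have i1 : p \in val I -> Xb I (pi1 p).-1 (pi2 p) by apply: lower_in; rewrite ?leq_pred.
have i2 : p \in val I -> Xb I (pi1 p) (pi2 p).-1 by apply: lower_in; rewrite ?leq_pred.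
move: i1 i2.
case: (p \in val I); case: (Xb I _ _); case: (Xb I _ _) => //= H1 H2; (try by case: (H1 isT)); (try by case: (H2 isT)); ring.
Qed.

Lemma sum_Phi_grid n (V : zmodType) (G : nat -> nat -> V) :
  (forall a b, ~~ inP n a b -> G a b = 0) ->
  \sum_(p : Phi n) G (pi1 p) (pi2 p) =
  \sum_(0 <= a < n.+1) \sum_(0 <= b < n.+1) G a b.
Proof.
move=> HG.
rewrite [RHS]big_mkord (eq_bigr (fun a : 'I_n.+1 => \sum_(b < n.+1) G a b)); last by move=> a _; rewrite big_mkord.
rewrite pair_bigA /=.
rewrite (bigID (fun x : 'I_n.+1 * 'I_n.+1 => inPhi x)) /=.
rewrite [X in _ = _ + X]big1 ?addr0; last by move=> [a b] /= H; apply: HG.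
by rewrite (big_sub (fun x => inPhi x) (fun x => G x.1 x.2)).
Qed.

Definition w (R : realType) n a b : ratfun R :=
  if inP n a b && odd (a + b + n) then (-1) ^+ (a - 1) else 0.

Lemma sum_nat_pred1 (V : zmodType) m k c (F : nat -> V) :
  (m <= c < k)%N -> \sum_(m <= i < k | i == c) F i = F c.
Proof.
move=> H; rewrite -big_filter.
have -> : [seq i <- index_iota m k | i == c] = [:: c].
  by apply: (filter_pred1_uniq (iota_uniq _ _)); rewrite mem_index_iota.
by rewrite big_seq1.
Qed.

Lemma sign_sum (R : realType) n a b :
  inP n a b -> (a <= n)%N -> (b <= n)%N ->
  (-1) ^+ (a - 1) + (-1) ^+ (n.+1 - b - 1) = 2 * w R n a b :> ratfun R.
Proof.
move=> H Ha Hb; rewrite /w H /=.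
have E : (a + b + n = (a - 1) + (n.+1 - b - 1) + (b.*2).+1)%N.
  move: H => /and3P [h1 h2 h3]; rewrite -addnn; lia.
rewrite E -(signr_odd _ (a - 1)) -(signr_odd _ (n.+1 - b - 1)) !oddD /= odd_double.
case: (odd (a - 1)); case: (odd (n.+1 - b - 1)) => /=; rewrite ?expr0 ?expr1; ring.
Qed.

Lemma step1 (R : realType) n (I : ideals n) :
  \sum_(1 <= i < n.+1) (-1) ^+ (i - 1) * Rbar R i I =
  2 * \sum_(p : Phi n) w R n (pi1 p) (pi2 p) * Tminus R p I.
Proof.
rewrite /Rbar.
under eq_bigr do rewrite mulrDr !big_distrr /= !(big_mkcond (fun p => _ && _)).
rewrite big_split /= [X in X + _]exchange_big [X in _ + X]exchange_big -big_split big_distrr /=.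
apply: eq_bigr => p _.
case: (pi_bounds p) => h1 h2 h3 h4 h5.
rewrite -!big_mkcond /=.
rewrite (eq_bigl (fun i => i == pi1 p)); last first.
  move=> i; apply/andP/eqP => [[/eqP -> _] //|->]; split => //; lia.
rewrite sum_nat_pred1; last by apply/andP; split; lia.
rewrite (eq_bigl (fun i => i == n.+1 - pi2 p)%N); last first.
  move=> i; apply/andP/eqP => [[/eqP E _]|->]; first lia.
  split; [apply/eqP|]; lia.
rewrite sum_nat_pred1; last by apply/andP; split; lia.
by rewrite -mulrDl sign_sum ?mulrA // /inP h1 h2 h3.
Qed.

Lemma peelr (V : zmodType) n (F : nat -> V) :
  \sum_(0 <= a < n.+1) F a = \sum_(0 <= a < n) F a + F n.
Proof. by rewrite big_nat_recr. Qed.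

Lemma peell (V : zmodType) n (F : nat -> V) :
  \sum_(0 <= a < n.+1) F a = F 0%N + \sum_(0 <= a < n) F a.+1.
Proof. by rewrite big_nat_recl. Qed.

Lemma X_outa (R : realType) n (I : ideals n) b : X R I n.+1 b = 0.
Proof. by rewrite /X /Xb /below ltnn /= memc_outa. Qed.

Lemma X_outb (R : realType) n (I : ideals n) a : X R I a n.+1 = 0.
Proof. by rewrite /X /Xb /below ltnn /= andbF memc_outb. Qed.

Lemma X_below (R : realType) n (I : ideals n) a b : below n a b -> X R I a b = 1.
Proof. by rewrite /X /Xb => ->. Qed.

Lemma w0l (R : realType) n b : w R n 0 b = 0.
Proof. by rewrite /w /inP. Qed.

Lemma w0r (R : realType) n a : w R n a 0 = 0.
Proof. by rewrite /w /inP /= andbF. Qed.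

Lemma inP_false n a b : (a + b < n.+1)%N -> inP n a b = false.
Proof. by move=> H; apply/negbTE; rewrite /inP; apply/negP => /and3P [? ? ?]; lia. Qed.

Lemma inP_true n a b : (1 <= a)%N -> (1 <= b)%N -> (n.+1 <= a + b)%N -> inP n a b.
Proof. by move=> ? ? ?; rewrite /inP; apply/and3P. Qed.

Lemma sgn_cancel (R : realType) a : (1 <= a)%N ->
  (-1) ^+ (a - 1) + (-1) ^+ (a.+1 - 1) = 0 :> ratfun R.
Proof. by case: a => // a _; rewrite !subn1 /= exprS mulN1r addrN. Qed.

Lemma ptT (R : realType) n (I : ideals n) a b : (a < n)%N -> (b < n)%N ->
  w R n a b * (X R I a.+1 b * X R I a b.+1)
  + w R n a.+1 b.+1 * (X R I a b.+1 * X R I a.+1 b)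
  = if b == (n.-1 - a)%N then (-1) ^+ a else 0.
Proof.
move=> Ha Hb; rewrite /w.
case: (boolP (b == (n.-1 - a)%N)) => Hc.
  have Hab : (a + b + 1 = n)%N by move/eqP: Hc; lia.
  rewrite (inP_false (a:=a) (b:=b)); last by lia.
  rewrite (inP_true (a:=a.+1) (b:=b.+1)); try lia.
  rewrite andFb andTb.
  have -> : (a.+1 + b.+1 + n = (n.*2).+1)%N by rewrite -addnn; lia.
  rewrite /= odd_double /= subn1 /= !X_below ?mulr1 ?mul0r ?add0r //;
    rewrite /below inP_false; try lia; rewrite andbT; apply/andP; split; lia.
case: (ltnP (a + b) n) => H1.
  by rewrite !inP_false /= ?mul0r ?addr0 //; lia.
case: (boolP (a + b == n)) => H2.
  have -> : (a + b + n = n.*2)%N by rewrite -addnn; lia.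
  have -> : (a.+1 + b.+1 + n = (n.*2).+2)%N by rewrite -addnn; lia.
  by rewrite /= !odd_double /= !andbF !mul0r addr0.
have Eo : odd (a.+1 + b.+1 + n) = odd (a + b + n) by rewrite !addSn addnS /= negbK.
rewrite Eo (inP_true (a:=a)); try lia.
rewrite (inP_true (a:=a.+1)); try lia.
rewrite !andTb.
case: (odd _); last by rewrite !mul0r addr0.
by rewrite [X R I a b.+1 * _]mulrC -mulrDl sgn_cancel ?mul0r //; lia.
Qed.

Lemma ptL (R : realType) n a b : (a < n)%N -> (b < n)%N ->
  w R n a b.+1 + w R n a.+1 b = 0.
Proof.
move=> Ha Hb; rewrite /w.
case: (ltnP (a + b) n) => H1.
  by rewrite !inP_false /= ?addr0 //; lia.
have Eo : odd (a.+1 + b + n) = odd (a + b.+1 + n) by rewrite addSn addnS.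
rewrite Eo (inP_true (a:=a)); try lia.
rewrite (inP_true (a:=a.+1)); try lia.
rewrite !andTb.
by case: (odd _); rewrite ?addr0 // sgn_cancel //; lia.
Qed.

Lemma T1eq (R : realType) n (I : ideals n) :
  \sum_(0 <= a < n.+1) \sum_(0 <= b < n.+1) w R n a b * (X R I a.+1 b * X R I a b.+1)
  = \sum_(0 <= a < n) \sum_(0 <= b < n) w R n a b * (X R I a.+1 b * X R I a b.+1).
Proof.
rewrite peelr [X in _ + X]big1 ?addr0; last by move=> b _; rewrite X_outa mul0r mulr0.
by apply: eq_bigr => a _; rewrite peelr X_outb !mulr0 addr0.
Qed.

Lemma T2eq (R : realType) n (I : ideals n) :
  \sum_(0 <= a < n.+1) \sum_(0 <= b < n.+1) w R n a b * (X R I a.-1 b * X R I a b.-1)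
  = \sum_(0 <= a < n) \sum_(0 <= b < n) w R n a.+1 b.+1 * (X R I a b.+1 * X R I a.+1 b).
Proof.
rewrite peell big1 ?add0r; last by move=> b _; rewrite w0l mul0r.
by apply: eq_bigr => a _; rewrite peell w0r mul0r add0r.
Qed.

Lemma L1eq (R : realType) n (I : ideals n) :
  \sum_(0 <= a < n.+1) \sum_(0 <= b < n.+1) w R n a b * X R I a.+1 b
  = \sum_(0 <= a < n) \sum_(0 <= b < n) w R n a b.+1 * X R I a.+1 b.+1.
Proof.
rewrite peelr [X in _ + X]big1 ?addr0; last by move=> b _; rewrite X_outa mulr0.
by apply: eq_bigr => a _; rewrite peell w0r mul0r add0r.
Qed.

Lemma L2eq (R : realType) n (I : ideals n) :
  \sum_(0 <= a < n.+1) \sum_(0 <= b < n.+1) w R n a b * X R I a b.+1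
  = \sum_(0 <= a < n) \sum_(0 <= b < n) w R n a.+1 b * X R I a.+1 b.+1.
Proof.
rewrite peell big1 ?add0r; last by move=> b _; rewrite w0l mul0r.
by apply: eq_bigr => a _; rewrite peelr X_outb mulr0 addr0.
Qed.

Lemma alt_sum (R : realType) n :
  \sum_(0 <= a < n) (-1) ^+ a = (odd n)%:R :> ratfun R.
Proof.
elim: n => [|n IH]; first by rewrite big_geq.
rewrite peelr IH -signr_odd /=.
by case: (odd n) => /=; rewrite ?expr0 ?expr1 ?addr0 ?add0r ?addrN.
Qed.

Lemma gridT (R : realType) n (I : ideals n) :
  \sum_(0 <= a < n.+1) \sum_(0 <= b < n.+1) w R n a b * (X R I a.+1 b * X R I a b.+1)
  + \sum_(0 <= a < n.+1) \sum_(0 <= b < n.+1) w R n a b * (X R I a.-1 b * X R I a b.-1)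
  = (odd n)%:R.
Proof.
rewrite T1eq T2eq -big_split /= -alt_sum.
apply: eq_big_nat => a /andP [_ Ha].
rewrite -big_split /=.
rewrite (eq_big_nat _ _ (F2 := fun b => if b == (n.-1 - a)%N then (-1) ^+ a else 0));
  last by move=> b /andP [_ Hb]; exact: ptT.
rewrite -big_mkcond sum_nat_pred1 //; apply/andP; split; lia.
Qed.

Lemma gridL (R : realType) n (I : ideals n) :
  \sum_(0 <= a < n.+1) \sum_(0 <= b < n.+1) w R n a b * X R I a.+1 b
  + \sum_(0 <= a < n.+1) \sum_(0 <= b < n.+1) w R n a b * X R I a b.+1 = 0.
Proof.
rewrite L1eq L2eq -big_split /=; apply: big1_seq => a; rewrite mem_index_iota => /andP [_ Ha].
rewrite -big_split /=; apply: big1_seq => b; rewrite mem_index_iota => /andP [_ Hb].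
by rewrite -mulrDl ptL ?mul0r.
Qed.

Lemma step2 (R : realType) n (I : ideals n) :
  \sum_(p : Phi n) w R n (pi1 p) (pi2 p) * Tminus R p I
  + \sum_(p : Phi n) w R n (pi1 p) (pi2 p) * Tplus R p I = (odd n)%:R.
Proof.
rewrite -big_split /=.
under eq_bigr => p _ do rewrite Tminus_lin Tplus_lin.
rewrite (sum_Phi_grid (G := fun a b =>
   w R n a b * (X R I a b - X R I a.+1 b - X R I a b.+1 + X R I a.+1 b * X R I a b.+1)
   + w R n a b * (X R I a.-1 b * X R I a b.-1 - X R I a b)));
  last by move=> a b H; rewrite /w (negbTE H) /= !mul0r addr0.
have E : forall a b,
   w R n a b * (X R I a b - X R I a.+1 b - X R I a b.+1 + X R I a.+1 b * X R I a b.+1)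
   + w R n a b * (X R I a.-1 b * X R I a b.-1 - X R I a b)
   = (w R n a b * (X R I a.+1 b * X R I a b.+1) + w R n a b * (X R I a.-1 b * X R I a b.-1))
     - (w R n a b * X R I a.+1 b + w R n a b * X R I a b.+1).
  by move=> a b; ring.
under eq_bigr => a _ do under eq_bigr => b _ do rewrite E.
under eq_bigr => a _ do rewrite sumrB !big_split /=.
by rewrite sumrB !big_split /= gridT gridL subr0.
Qed.

Lemma final_alg (F : fieldType) (b : bool) (q B : F) : q + 1 != 0 -> (2 : F) != 0 ->
  2^-1 * (2 * B) - (if b then (q + 1)^-1 else 0) = - (q + 1)^-1 * (b%:R - B) + (q + 1)^-1 * q * B.
Proof. move=> hq h2; case: b => /=; field; by rewrite ?hq ?h2. Qed.

Theorem theorem5p17 (R : realType) (n : nat) (hn : (1 <= n)%N) :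
  @qequiv R n
    (fun I : ideals n =>
       2^-1 * \sum_(1 <= i < n.+1) (-1) ^+ (i - 1) * Rbar R i I)
    (fun _ : ideals n => if odd n then (qvar R + 1)^-1 else 0).
Proof.
have hq : qvar R + 1 != 0.
  rewrite /qvar -tofrac1 -tofracD tofrac_eq0 -polyC1.
  apply/negP => /eqP H; have := congr1 (size : {poly R} -> nat) H.
  by rewrite size_XaddC size_poly0.
have h2 : (2 : ratfun R) != 0.
  have e2 : tofrac (2%:R : {poly R}) = 2%:R :> ratfun R by rewrite tofracMn tofrac1.
  by rewrite -e2 tofrac_eq0 -polyC_natr polyC_eq0 pnatr_eq0.
exists (fun p => - w R n (pi1 p) (pi2 p) / (qvar R + 1)).
move=> I.
rewrite step1.
have S2 := step2 R I.
set Bm := \sum_(p : Phi n) w R n (pi1 p) (pi2 p) * Tminus R p I in S2 *.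
set Bp := \sum_(p : Phi n) w R n (pi1 p) (pi2 p) * Tplus R p I in S2 *.
rewrite /Tq.
have -> : \sum_(p : Phi n) (- w R n (pi1 p) (pi2 p) / (qvar R + 1)) *
            (Tplus R p I - qvar R * Tminus R p I)
          = - (qvar R + 1)^-1 * Bp + (qvar R + 1)^-1 * qvar R * Bm.
  rewrite (eq_bigr (fun p => - (qvar R + 1)^-1 * (w R n (pi1 p) (pi2 p) * Tplus R p I)
       + (qvar R + 1)^-1 * qvar R * (w R n (pi1 p) (pi2 p) * Tminus R p I))); last first.
    by move=> p _; ring.
  by rewrite big_split /= -!mulr_sumr.
have -> : Bp = (odd n)%:R - Bm by rewrite -S2 [Bm + Bp]addrC addrK.
exact: (final_alg (odd n) Bm hq h2).
Qed.
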